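(* Let $m,n\in\mathbb{N}$, $s_1,\dots,s_n\in\mathbb{C}$ (nonzero in the discrete case), $\boldsymbol{u}_j,\boldsymbol{v}_j\in\mathbb{C}^m$, and define $k_{jl}=\boldsymbol{v}_j^\intercal\boldsymbol{u}_l/(s_j+s_l^* )$ in the continuous case (assuming $s_j+s_l^*\neq0$) and $k_{jl}=\boldsymbol{v}_j^\intercal\boldsymbol{u}_l/(1-s_js_l^* )$ in the discrete case (assuming $s_js_l^*\neq1$); set $\eta=0$ (continuous) or $\eta=1$ (discrete). Fix $i\in\{1,\dots,n\}$ with $k_{ii}\neq0$ and suppose $K_1=(k_{jl})_{j,l=1}^{i-1}$ is invertible. Define $$\boldsymbol{u}_i^{(-)}=\boldsymbol{u}_i-\sum_{j,k=1}^{i-1}\boldsymbol{u}_j(K_1^{-1})_{jk}k_{ki},\qquad \boldsymbol{v}_i^{(-)}=s_i^{\eta}\Big(s_i^{-\eta}\boldsymbol{v}_i-\sum_{j,k=1}^{i-1}k_{ij}(K_1^{-1})_{jk}s_k^{-\eta}\boldsymbol{v}_k\Big),$$ $$\gamma_i^{(-)}=\frac{1}{k_{ii}}\Big(k_{ii}-\sum_{j,k=1}^{i-1}k_{ij}(K_1^{-1})_{jk}k_{ki}\Big).$$ Then $\boldsymbol{v}_i^{(-)\intercal}\boldsymbol{u}_i^{(-)}=\gamma_i^{(-)}\,\boldsymbol{v}_i^\intercal\boldsymbol{u}_i$.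
   Context: ${}^*$ denotes complex conjugation and ${}^\intercal$ transposition. For $i=1$ the sums are empty. *)

(* Defs.v *)
From mathcomp Require Import all_boot all_order all_algebra.
Set Implicit Arguments. Unset Strict Implicit. Unset Printing Implicit Defensive.
Import Order.TTheory GRing.Theory Num.Theory.
Local Open Scope ring_scope.

Section Defs.
Variable C : numClosedFieldType.

Definition tdot (m : nat) (v u : 'cV[C]_m) : C := (v^T *m u) 0 0.

(* disc = false : continuous case (eta = 0); disc = true : discrete case (eta = 1) *)
Definition kden (disc : bool) (sj sl : C) : C :=
  if disc then 1 - sj * sl^* else sj + sl^*.

Definition spow (disc : bool) (x : C) : C := if disc then x else 1.
Definition spowinv (disc : bool) (x : C) : C := if disc then x^-1 else 1.

Definition kent (disc : bool) (m n : nat) (s : 'I_n -> C)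
  (u v : 'I_n -> 'cV[C]_m) (j l : 'I_n) : C :=
  tdot (v j) (u l) / kden disc (s j) (s l).

(* embedding of the first i indices (0-based: 0..i-1, i.e. 1..i-1 in the paper's 1-based numbering) *)
Definition wid (n : nat) (i : 'I_n) : 'I_i -> 'I_n :=
  widen_ord (ltnW (ltn_ord i)).
Arguments wid {n} i _.

Definition K1 (disc : bool) (m n : nat) (s : 'I_n -> C)
  (u v : 'I_n -> 'cV[C]_m) (i : 'I_n) : 'M[C]_i :=
  \matrix_(j < i, l < i) kent disc s u v (wid i j) (wid i l).

Definition u_minus (disc : bool) (m n : nat) (s : 'I_n -> C)
  (u v : 'I_n -> 'cV[C]_m) (i : 'I_n) : 'cV[C]_m :=
  let k := kent disc s u v in
  let Ki := invmx (K1 disc s u v i) in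
  u i - \sum_(j < i) \sum_(k0 < i) (Ki j k0 * k (wid i k0) i) *: u (wid i j).

Definition v_minus (disc : bool) (m n : nat) (s : 'I_n -> C)
  (u v : 'I_n -> 'cV[C]_m) (i : 'I_n) : 'cV[C]_m :=
  let k := kent disc s u v in
  let Ki := invmx (K1 disc s u v i) in
  spow disc (s i) *:
    (spowinv disc (s i) *: v i
     - \sum_(j < i) \sum_(k0 < i)
         (k i (wid i j) * Ki j k0 * spowinv disc (s (wid i k0))) *: v (wid i k0)).

Definition gamma_minus (disc : bool) (m n : nat) (s : 'I_n -> C)
  (u v : 'I_n -> 'cV[C]_m) (i : 'I_n) : C :=
  let k := kent disc s u v in
  let Ki := invmx (K1 disc s u v i) in
  (k i i)^-1 * (k i i - \sum_(j < i) \sum_(k0 < i) k i (wid i j) * Ki j k0 * k (wid i k0) i).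

End Defs.

(* Main.v *)
Require Import Defs.
From HB Require Import structures.
From mathcomp Require Import all_boot all_order all_algebra.
Import Order.TTheory GRing.Theory Num.Theory.
Local Open Scope ring_scope.
Lemma alg (F : comNzRingType) (kii p0 e s0 w0 q A B : F) :
  kii*(p0+e*s0*w0) - (p0*q + e*s0*B) - s0*(A + e*w0*q) + s0*(A+e*B)
  = (p0+e*s0*w0)*(kii - q).
Proof.
rewrite !mulrDr.
have -> : s0 * (e * B) = e * s0 * B by rewrite mulrCA mulrA.
have -> : s0 * (e * w0 * q) = e * s0 * w0 * q by rewrite !mulrA (mulrC s0).
rewrite !opprD !addrA !mulrDl (mulrC kii) (mulrC kii) ?mulrA.
rewrite -(addrA _ (- (s0 * A))) (addrC (- (s0*A))) !addrA addrNK.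
rewrite -(addrA _ (- (e*s0*B))) (addrC (- (e*s0*B))) !addrA addrNK.
by rewrite !mulrN.
Qed.

Lemma key (F : fieldType) (I : nat) (K Ki : 'M[F]_I) (hl : Ki *m K = 1%:M) (hr : K *m Ki = 1%:M)
 (a b p sg w al be : 'I_I -> F) (p0 s0 w0 e kii : F) (hsg : forall k, sg k != 0)
 (hal : forall k, al k = \sum_j a j * Ki j k) (hbe : forall j, be j = \sum_k Ki j k * b k)
 (T00 : F) (T0 Tc : 'I_I -> F) (TT : 'I_I -> 'I_I -> F)
 (h00 : T00 = kii * (p0 + e*s0*w0)) (h0 : forall j, T0 j = a j * (p0 + e*s0*w j))
 (hc : forall k, Tc k = b k * (p k + e * sg k * w0))
 (hT : forall k j, TT k j = K k j * (p k + e * sg k * w j)) :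
 T00 - \sum_j be j * T0 j
   - s0 * \sum_k (al k / sg k) * Tc k
   + s0 * \sum_k (al k / sg k) * \sum_j be j * TT k j
 = (p0 + e*s0*w0) * (kii - \sum_j \sum_k a j * Ki j k * b k).
Proof.
set q := \sum_j \sum_k a j * Ki j k * b k.
have Kbe k : \sum_j K k j * be j = b k.
  rewrite (eq_bigr (fun j => \sum_l K k j * (Ki j l * b l))); last first.
    by move=> j _; rewrite hbe mulr_sumr.
  rewrite exchange_big /=.
  rewrite (eq_bigr (fun l => (\sum_j K k j * Ki j l) * b l)); last first.
    by move=> l _; rewrite mulr_suml; apply: eq_bigr => j _; rewrite mulrA.
  have -> : b k = ((1%:M : 'M[F]_I) *m (\col_l b l)) k 0 by rewrite mul1mx mxE.
  rewrite -hr mxE; apply: eq_bigr => l _; by rewrite !mxE.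
have alK j : \sum_k al k * K k j = a j.
  rewrite (eq_bigr (fun k => \sum_l a l * Ki l k * K k j)); last first.
    by move=> k _; rewrite hal mulr_suml.
  rewrite exchange_big /=.
  rewrite (eq_bigr (fun l => a l * \sum_k Ki l k * K k j)); last first.
    by move=> l _; rewrite mulr_sumr; apply: eq_bigr => k _; rewrite mulrA.
  have -> : a j = ((\row_l a l) *m (1%:M : 'M[F]_I)) 0 j by rewrite mulmx1 mxE.
  rewrite -hl mxE; apply: eq_bigr => l _; by rewrite !mxE.
have q1 : \sum_k al k * b k = q.
  rewrite /q exchange_big; apply: eq_bigr => k _; by rewrite hal mulr_suml.
have q2 : \sum_j be j * a j = q.
  rewrite /q; apply: eq_bigr => j _; rewrite hbe mulr_suml.
  by apply: eq_bigr => k _; rewrite mulrC mulrA.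
set B := \sum_j be j * w j * a j.
set A := \sum_k al k / sg k * p k * b k.
have E3 : \sum_j be j * T0 j = p0 * q + e*s0*B.
  rewrite (eq_bigr (fun j => p0 * (be j * a j) + e*s0*(be j * w j * a j))); last first.
    move=> j _; rewrite h0 !mulrDr; congr (_ + _); first by rewrite mulrA mulrC.
    by rewrite (mulrC (a j)) mulrCA -!mulrA (mulrCA (w j)).
  by rewrite big_split /= -!mulr_sumr q2.
have E2 : \sum_k al k / sg k * Tc k = A + e*w0*q.
  rewrite (eq_bigr (fun k => al k / sg k * p k * b k + e*w0*(al k * b k))); last first.
    move=> k _; rewrite hc !mulrDr; congr (_ + _); first by rewrite (mulrC (b k)) mulrA.
    rewrite -!mulrA (mulrCA (b k) e) (mulrCA (b k) (sg k)) (mulrCA (sg k)^-1 e) mulKf //.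
    rewrite (mulrCA (al k) e) (mulrC (b k)) mulrCA. by rewrite mulrCA (mulrCA (al k)).
  by rewrite big_split /= -!mulr_sumr q1.
have E4 : \sum_k al k / sg k * \sum_j be j * TT k j = A + e*B.
  have inner k : \sum_j be j * TT k j = p k * b k + e * sg k * \sum_j K k j * be j * w j.
    rewrite -Kbe mulr_sumr mulr_sumr -big_split /=; apply: eq_bigr => j _.
    rewrite hT mulrDr mulrDr; congr (_ + _); first by rewrite mulrCA mulrC [RHS]mulrCA [RHS]mulrC (mulrC (be j)).
    by rewrite -!mulrA (mulrCA (be j) (K k j)) (mulrCA (be j) e) (mulrCA (K k j) e) (mulrCA (be j) (sg k)) (mulrCA (K k j) (sg k)).
  rewrite (eq_bigr (fun k => al k / sg k * p k * b k + e * (al k * \sum_j K k j * be j * w j))); last first.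
    move=> k _; rewrite inner mulrDr; congr (_ + _); first by rewrite !mulrA.
    by rewrite -!mulrA (mulrCA (sg k)^-1 e) mulKf // mulrCA.
  rewrite big_split /= -mulr_sumr; congr (_ + e * _).
  rewrite /B (eq_bigr (fun k => \sum_j al k * K k j * (be j * w j))); last first.
    by move=> k _; rewrite mulr_sumr; apply: eq_bigr => j _; rewrite -!mulrA.
  rewrite exchange_big /=; apply: eq_bigr => j _.
  by rewrite -mulr_suml alK mulrC.
by rewrite h00 E3 E2 E4 alg.
Qed.
Section T.
Variable C : numClosedFieldType.
Variable m : nat.
Implicit Types v u : 'cV[C]_m.

Lemma tdotE v u : tdot v u = \sum_k v k 0 * u k 0.
Proof. rewrite /tdot !mxE; apply: eq_bigr => k _; rewrite mxE. done. Qed.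

Lemma tdotC v u : tdot v u = tdot u v.
Proof. rewrite !tdotE; apply: eq_bigr => k _; exact: mulrC. Qed.

Lemma tdotDl v1 v2 u : tdot (v1 + v2) u = tdot v1 u + tdot v2 u.
Proof. rewrite !tdotE -big_split; apply: eq_bigr => k _; by rewrite mxE mulrDl. Qed.

Lemma tdotNl v u : tdot (- v) u = - tdot v u.
Proof. rewrite !tdotE -sumrN; apply: eq_bigr => k _; by rewrite mxE mulNr. Qed.

Lemma tdotZl c v u : tdot (c *: v) u = c * tdot v u.
Proof. rewrite !tdotE mulr_sumr; apply: eq_bigr => k _; by rewrite mxE mulrA. Qed.

Lemma tdot_suml (I : nat) (f : 'I_I -> 'cV[C]_m) u :
  tdot (\sum_j f j) u = \sum_j tdot (f j) u.
Proof.
rewrite tdotE; under eq_bigr do rewrite summxE mulr_suml.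
rewrite exchange_big; apply: eq_bigr => j _; by rewrite tdotE.
Qed.

Lemma tdotBl v1 v2 u : tdot (v1 - v2) u = tdot v1 u - tdot v2 u.
Proof. by rewrite tdotDl tdotNl. Qed.
Lemma tdotBr v u1 u2 : tdot v (u1 - u2) = tdot v u1 - tdot v u2.
Proof. by rewrite tdotC tdotBl !(tdotC v). Qed.
Lemma tdotZr c v u : tdot v (c *: u) = c * tdot v u.
Proof. by rewrite tdotC tdotZl tdotC. Qed.
Lemma tdot_sumr (I : nat) (f : 'I_I -> 'cV[C]_m) v :
  tdot v (\sum_j f j) = \sum_j tdot v (f j).
Proof. rewrite tdotC tdot_suml; apply: eq_bigr => j _; exact: tdotC. Qed.
Lemma tdot_sumZl (I : nat) (f : 'I_I -> C) (g : 'I_I -> 'cV[C]_m) u :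
  tdot (\sum_j f j *: g j) u = \sum_j f j * tdot (g j) u.
Proof. rewrite tdot_suml; apply: eq_bigr => j _; exact: tdotZl. Qed.
Lemma tdot_sumZr (I : nat) (f : 'I_I -> C) (g : 'I_I -> 'cV[C]_m) v :
  tdot v (\sum_j f j *: g j) = \sum_j f j * tdot v (g j).
Proof. rewrite tdot_sumr; apply: eq_bigr => j _; exact: tdotZr. Qed.
Lemma tdot_sumZ2 (I J : nat) (f : 'I_I -> C) (g : 'I_I -> 'cV[C]_m)
  (f' : 'I_J -> C) (g' : 'I_J -> 'cV[C]_m) :
  tdot (\sum_j f j *: g j) (\sum_l f' l *: g' l)
  = \sum_j f j * \sum_l f' l * tdot (g j) (g' l).
Proof. rewrite tdot_sumZl; apply: eq_bigr => j _; by rewrite tdot_sumZr. Qed.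
End T.

Theorem proposition6p9 (C : numClosedFieldType) (disc : bool) (m n : nat)
  (s : 'I_n -> C) (u v : 'I_n -> 'cV[C]_m)
  (hs : disc -> forall j, s j != 0)
  (hden : forall j l, kden disc (s j) (s l) != 0)
  (i : 'I_n)
  (hkii : kent disc s u v i i != 0)
  (hK1 : K1 disc s u v i \in unitmx) :
  tdot (v_minus disc s u v i) (u_minus disc s u v i)
  = gamma_minus disc s u v i * tdot (v i) (u i).
Proof.
set k := kent disc s u v.
set K := K1 disc s u v i.
set Ki := invmx K.
pose sg x := spow disc (s x).
pose p x := if disc then 1 else s x.
pose e : C := if disc then -1 else 1.
pose w y := (s y)^*.
have hd x y : kden disc (s x) (s y) = p x + e * sg x * w y.
  by rewrite /p /e /sg /w /kden /spow; case: (disc) => /=; rewrite ?mulN1r ?mul1r ?mulr1 ?mulNr.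
have hT x y : tdot (v x) (u y) = k x y * (p x + e * sg x * w y).
  by rewrite -hd /k /kent divfK.
have hsg x : sg x != 0.
  by rewrite /sg /spow; case E: disc => //=; [apply: hs | exact: oner_neq0].
have hinv x : spowinv disc (s x) = (sg x)^-1.
  by rewrite /sg /spow /spowinv; case: (disc) => //; rewrite invr1.
pose al (l : 'I_i) := \sum_(j < i) k i (@wid _ i j) * Ki j l.
pose be (j : 'I_i) := \sum_(l < i) Ki j l * k (@wid _ i l) i.
have hu : u_minus disc s u v i = u i - \sum_j be j *: u (@wid _ i j).
  rewrite /u_minus -/k -/K -/Ki; congr (_ - _); apply: eq_bigr => j _.
  by rewrite scaler_suml.
have hv : v_minus disc s u v i =
   sg i *: ((sg i)^-1 *: v i - \sum_l (al l / sg (@wid _ i l)) *: v (@wid _ i l)).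
  rewrite /v_minus -/k -/K -/Ki hinv; congr (_ *: (_ - _)).
  rewrite exchange_big /=; apply: eq_bigr => l _.
  rewrite /al mulr_suml scaler_suml; apply: eq_bigr => j _.
  by rewrite hinv.
have hTT (l j : 'I_i) : tdot (v (@wid _ i l)) (u (@wid _ i j))
    = K l j * (p (@wid _ i l) + e * sg (@wid _ i l) * w (@wid _ i j)).
  by rewrite hT /K /K1 mxE.
have KEY := @key C i K Ki (mulVmx hK1) (mulmxV hK1)
  (fun j => k i (@wid _ i j)) (fun l => k (@wid _ i l) i)
  (fun l => p (@wid _ i l)) (fun l => sg (@wid _ i l)) (fun l => w (@wid _ i l)) al be
  (p i) (sg i) (w i) e (k i i) (fun l => hsg _) (fun l => erefl) (fun j => erefl)
  (tdot (v i) (u i)) (fun j => tdot (v i) (u (@wid _ i j)))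
  (fun l => tdot (v (@wid _ i l)) (u i)) (fun l j => tdot (v (@wid _ i l)) (u (@wid _ i j)))
  (hT i i) (fun j => hT i _) (fun l => hT _ i)
  hTT.
rewrite hu hv tdotZl tdotBl !tdotBr tdotZl tdot_sumZ2 tdot_sumZr tdot_sumZl.
have -> : \sum_j be j * tdot ((sg i)^-1 *: v i) (u (@wid _ i j))
   = (sg i)^-1 * \sum_j be j * tdot (v i) (u (@wid _ i j)).
  by rewrite mulr_sumr; apply: eq_bigr => j _; rewrite tdotZl mulrCA.
set T00 := tdot (v i) (u i) in KEY *.
set S1 := \sum_j be j * tdot (v i) (u (@wid _ i j)) in KEY *.
set S2 := \sum_j al j / sg (@wid _ i j) * tdot (v (@wid _ i j)) (u i) in KEY *.
set S3 := \sum_j al j / sg (@wid _ i j) * _ in KEY *.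
have -> : sg i * ((sg i)^-1 * T00 - (sg i)^-1 * S1 - (S2 - S3))
    = T00 - S1 - sg i * S2 + sg i * S3.
  by rewrite mulrBr mulrBr mulrBr !mulrA mulfV // !mul1r opprB addrA addrAC.
rewrite KEY /gamma_minus -/k -/K -/Ki /T00 hT [RHS]mulrC -mulrA (mulrCA _ (k i i)^-1).
by rewrite -(mulrA (k i i)) mulKf.
Qed.
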